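(* In the setting described in the context, let $\mathbf{r}_t,\mathbf{s}_t,\mathbf{L}_t$ be produced by the O-LSD iteration. Then: (1) the values $\hat\ell(\mathbf{d},\mathbf{L},\mathbf{r},\mathbf{s})$ and $\ell(\mathbf{d},\mathbf{L})$ (for data $\mathbf{d}$, iterates $\mathbf{L}=\mathbf{L}_t$ and the corresponding minimizers $\mathbf{r},\mathbf{s}$) are uniformly bounded; (2) the surrogate functions $g_t(\mathbf{L})$ are uniformly bounded and Lipschitz in $\mathbf{L}$.
   Context: Fix integers $p,r\ge 1$ and constants $\lambda_1,\lambda_2>0$. Let $\mathcal{G}$ be a finite collection of subsets of $\{1,\dots,p\}$. For $\mathbf{s}\in\mathbb{R}^p$ and $g\in\mathcal{G}$, let $\mathbf{s}_{|g}$ be the vector equal to $\mathbf{s}$ on indices in $g$ and zero elsewhere, and $\|\mathbf{s}\|_{\ell_1/\ell_\infty}=\sum_{g\in\mathcal{G}}\|\mathbf{s}_{|g}\|_\infty$. Define $\hat\ell(\mathbf{d},\mathbf{L},\mathbf{r},\mathbf{s})=\tfrac12\|\mathbf{d}-\mathbf{L}\mathbf{r}-\mathbf{s}\|_2^2+\tfrac{\lambda_1}{2}\|\mathbf{r}\|_2^2+\lambda_2\|\mathbf{s}\|_{\ell_1/\ell_\infty}$ and $\ell(\mathbf{d},\mathbf{L})=\min_{\mathbf{r},\mathbf{s}}\hat\ell(\mathbf{d},\mathbf{L},\mathbf{r},\mathbf{s})$. Data: $\mathbf{d}_1,\mathbf{d}_2,\dots\in\mathbb{R}^p$ independent and uniformly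 bounded (there is $M$ with $\|\mathbf{d}_t\|_2\le M$ for all $t$). O-LSD iteration: arbitrary $\mathbf{L}_0\in\mathbb{R}^{p\times r}$, $\mathbf{A}_0=\mathbf{0}$, $\mathbf{B}_0=\mathbf{0}$. For $t\ge1$: $(\mathbf{r}_t,\mathbf{s}_t)$ is a minimizer of $\hat\ell(\mathbf{d}_t,\mathbf{L}_{t-1},\cdot,\cdot)$; $\mathbf{A}_t=\mathbf{A}_{t-1}+\mathbf{r}_t\mathbf{r}_t^T$, $\mathbf{B}_t=\mathbf{B}_{t-1}+(\mathbf{d}_t-\mathbf{s}_t)\mathbf{r}_t^T$; $\mathbf{L}_t$ is the minimizer of the surrogate $g_t(\mathbf{L})=\frac1t\sum_{i=1}^t\hat\ell(\mathbf{d}_i,\mathbf{L},\mathbf{r}_i,\mathbf{s}_i)+\frac{\lambda_1}{2t}\|\mathbf{L}\|_F^2$, i.e. $\mathbf{L}_t=\mathbf{B}_t(\mathbf{A}_t+\lambda_1\mathbf{I})^{-1}$. The iterates $\mathbf{L}_t$ lie in a compact set $\mathcal{L}\subset\mathbb{R}^{p\times r}$, and ''uniformly bounded/Lipschitz'' means with constants independent of $t$, for $\mathbf{L}\in\mathcal{L}$. *)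

(* Defs.v *)
From HB Require Import structures.
From mathcomp Require Import all_boot all_order all_algebra.
From mathcomp Require Import all_classical all_reals all_analysis.
Set Implicit Arguments. Unset Strict Implicit. Unset Printing Implicit Defensive.
Import Order.TTheory GRing.Theory Num.Theory.
Import numFieldNormedType.Exports.
Local Open Scope ring_scope.
Local Open Scope classical_set_scope.

Section OLSD.
Variable R : realType.

Definition sqnorm2 n (x : 'cV[R]_n) : R := \sum_(i < n) (x i ord0) ^+ 2.

Definition frob m n (A : 'M[R]_(m, n)) : R :=
  Num.sqrt (\sum_(i < m) \sum_(j < n) (A i j) ^+ 2).

Definition restr p (g : {set 'I_p}) (s : 'cV[R]_p) : 'cV[R]_p :=
  \col_i (if i \in g then s i ord0 else 0).

Definition inftynorm n (x : 'cV[R]_n) : R := \big[Num.max/0]_(i < n) `|x i ord0|.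

Definition l1linf p (G : {set {set 'I_p}}) (s : 'cV[R]_p) : R :=
  \sum_(g in G) inftynorm (restr g s).

Definition lhat p k (lam1 lam2 : R) (G : {set {set 'I_p}})
  (d : 'cV[R]_p) (L : 'M[R]_(p, k)) (r : 'cV[R]_k) (s : 'cV[R]_p) : R :=
  2^-1 * sqnorm2 (d - L *m r - s) + lam1 / 2 * sqnorm2 r + lam2 * l1linf G s.

(* ell(d, L) = min_{r,s} \hat ell(d, L, r, s), written as the infimum
   of the values (which is the minimum whenever the minimum exists) *)
Definition ell p k (lam1 lam2 : R) (G : {set {set 'I_p}})
  (d : 'cV[R]_p) (L : 'M[R]_(p, k)) : R :=
  inf [set lhat lam1 lam2 G d L r s | r in [set: 'cV[R]_k] & s in [set: 'cV[R]_p]].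

Definition is_minimizer p k (lam1 lam2 : R) (G : {set {set 'I_p}})
  (d : 'cV[R]_p) (L : 'M[R]_(p, k)) (r : 'cV[R]_k) (s : 'cV[R]_p) : Prop :=
  forall r' s', lhat lam1 lam2 G d L r s <= lhat lam1 lam2 G d L r' s'.

Definition Amat k (rs : nat -> 'cV[R]_k) (t : nat) : 'M[R]_k :=
  \sum_(1 <= i < t.+1) rs i *m (rs i)^T.

Definition Bmat p k (ds ss : nat -> 'cV[R]_p) (rs : nat -> 'cV[R]_k) (t : nat)
  : 'M[R]_(p, k) :=
  \sum_(1 <= i < t.+1) (ds i - ss i) *m (rs i)^T.

Definition surrogate p k (lam1 lam2 : R) (G : {set {set 'I_p}})
  (ds ss : nat -> 'cV[R]_p) (rs : nat -> 'cV[R]_k) (t : nat) (L : 'M[R]_(p, k)) : R :=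
  t%:R^-1 * (\sum_(1 <= i < t.+1) lhat lam1 lam2 G (ds i) L (rs i) (ss i))
  + lam1 / (2 * t%:R) * (frob L) ^+ 2.

Definition olsd p k (lam1 lam2 : R) (G : {set {set 'I_p}})
  (ds : nat -> 'cV[R]_p) (Ls : nat -> 'M[R]_(p, k))
  (rs : nat -> 'cV[R]_k) (ss : nat -> 'cV[R]_p) : Prop :=
  forall t, (1 <= t)%N ->
    is_minimizer lam1 lam2 G (ds t) (Ls t.-1) (rs t) (ss t) /\
    Ls t = Bmat ds ss rs t *m invmx (Amat rs t + lam1%:M).

End OLSD.

(* Main.v *)
Require Import Defs.
From HB Require Import structures.
From mathcomp Require Import all_boot all_order all_algebra.
From mathcomp Require Import all_classical all_reals all_analysis.
From mathcomp Require Import ring lra.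
Import Order.TTheory GRing.Theory Num.Theory.
Import numFieldNormedType.Exports.
Local Open Scope ring_scope.
Local Open Scope classical_set_scope.

Set Implicit Arguments.
Section Helpers.
Context {R : realType}.

Lemma abs_le_1sq (x : R) : `|x| <= 1 + x ^+ 2.
Proof.
rewrite -real_normK ?num_real //.
have := normr_ge0 x; set a := `|x|; move=> ha; nra.
Qed.

Lemma le_sum_term n (F : 'I_n -> R) i : (forall j, 0 <= F j) -> F i <= \sum_j F j.
Proof. by move=> h; rewrite (bigD1 i) //= lerDl sumr_ge0. Qed.

Lemma sqnorm2_ge0 n (x : 'cV[R]_n) : 0 <= sqnorm2 x.
Proof. by apply: sumr_ge0 => i _; apply: sqr_ge0. Qed.

Lemma entry_sq_le n (x : 'cV[R]_n) i : (x i ord0) ^+ 2 <= sqnorm2 x.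
Proof. by apply: le_sum_term => j; apply: sqr_ge0. Qed.

Lemma entry_le_frob m n (A : 'M[R]_(m, n)) i j : `|A i j| <= frob A.
Proof.
rewrite /frob -sqrtr_sqr ler_sqrt; last by apply: sumr_ge0 => a _; apply: sumr_ge0 => b _; apply: sqr_ge0.
apply: le_trans (@le_sum_term m (fun a => \sum_(b < n) A a b ^+ 2) i _); last first.
  by move=> a; apply: sumr_ge0 => b _; apply: sqr_ge0.
by apply: (@le_sum_term n (fun b => A i b ^+ 2) j) => b; apply: sqr_ge0.
Qed.

Lemma frob_sq m n (A : 'M[R]_(m, n)) : frob A ^+ 2 = \sum_i \sum_j A i j ^+ 2.
Proof. by rewrite /frob sqr_sqrtr //; apply: sumr_ge0 => a _; apply: sumr_ge0 => b _; apply: sqr_ge0. Qed.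

Lemma sq_diff n (F G : 'I_n -> R) :
  `|\sum_i F i ^+ 2 - \sum_i G i ^+ 2| <= \sum_i `|F i - G i| * `|F i + G i|.
Proof.
rewrite -sumrB; apply: le_trans (ler_norm_sum _ _ _) _.
apply: ler_sum => i _; rewrite -normrM le_eqVlt; apply/orP; left; apply/eqP; congr `|_|; ring.
Qed.

Lemma inftynorm_ge0 n (x : 'cV[R]_n) : 0 <= inftynorm x.
Proof.
rewrite /inftynorm; apply: (big_ind (fun y => 0 <= y)) => //.
  by move=> a b ha hb; rewrite le_max ha.
Qed.

Lemma l1linf_ge0 p (G : {set {set 'I_p}}) (s : 'cV[R]_p) : 0 <= l1linf G s.
Proof. by apply: sumr_ge0 => g _; apply: inftynorm_ge0. Qed.

Lemma l1linf0 p (G : {set {set 'I_p}}) : l1linf G (0 : 'cV[R]_p) = 0.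
Proof.
apply: big1 => g _; rewrite /inftynorm; apply: (big_ind (fun y => y = 0)) => //.
  by move=> a b -> ->; rewrite maxxx.
by move=> i _; rewrite !mxE; case: ifP => _; rewrite ?mxE normr0.
Qed.

Lemma sqnorm20 n : sqnorm2 (0 : 'cV[R]_n) = 0.
Proof. by apply: big1 => i _; rewrite mxE expr0n. Qed.

Lemma lhat_ge0 p k lam1 lam2 G d (L : 'M[R]_(p, k)) r s :
  0 <= lam1 -> 0 <= lam2 -> 0 <= lhat lam1 lam2 G d L r s.
Proof.
move=> h1 h2; rewrite /lhat; apply: addr_ge0; first apply: addr_ge0.
- by apply: mulr_ge0 => //; apply: sqnorm2_ge0.
- by apply: mulr_ge0; [apply: divr_ge0|apply: sqnorm2_ge0].
- by apply: mulr_ge0 => //; apply: l1linf_ge0.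
Qed.

Lemma lhat00 p k lam1 lam2 G d (L : 'M[R]_(p, k)) :
  lhat lam1 lam2 G d L 0 0 = 2^-1 * sqnorm2 d.
Proof. by rewrite /lhat mulmx0 !subr0 sqnorm20 l1linf0 !mulr0 !addr0. Qed.


Lemma min_bounds p k lam1 lam2 G (d : 'cV[R]_p) (L : 'M[R]_(p, k)) r s D :
  0 < lam1 -> 0 < lam2 -> sqnorm2 d <= D -> is_minimizer lam1 lam2 G d L r s ->
  [/\ lhat lam1 lam2 G d L r s <= D / 2,
      sqnorm2 (d - L *m r - s) <= D &
      (forall j, `|r j ord0| <= 1 + D / lam1)].
Proof.
move=> h1 h2 hd hm.
have hl : lhat lam1 lam2 G d L r s <= D / 2.
  apply: le_trans (hm 0 0) _; rewrite lhat00; lra.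
have ha := sqnorm2_ge0 (d - L *m r - s).
have hb := sqnorm2_ge0 r.
have hc := l1linf_ge0 G s.
have hb' : 0 <= lam1 * sqnorm2 r by apply: mulr_ge0 => //; apply: ltW.
have hc' : 0 <= lam2 * l1linf G s by apply: mulr_ge0 => //; apply: ltW.
have hl' := hl; rewrite /lhat in hl'.
split => //.
- lra.
- move=> j; apply: le_trans (abs_le_1sq _) _; rewrite lerD2l.
  apply: le_trans (entry_sq_le r j) _.
  rewrite ler_pdivlMr // mulrC; lra.
Qed.

Lemma sum_constI n (x : R) : \sum_(i < n) x = n%:R * x.
Proof. by rewrite sumr_const card_ord mulr_natl. Qed.

Lemma mulsum_bound k (a b : 'I_k -> R) B Rb :
  (forall j, `|a j| <= B) -> (forall j, `|b j| <= Rb) ->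
  `|\sum_j a j * b j| <= k%:R * (B * Rb).
Proof.
move=> ha hb; apply: le_trans (ler_norm_sum _ _ _) _.
apply: (@le_trans _ _ (\sum_(j < k) (B * Rb))); last by rewrite sum_constI.
apply: ler_sum => j _; rewrite normrM; apply: ler_pM => //.
Qed.

Lemma avg_bound t (X : nat -> R) c : (0 < t)%N ->
  (forall i, (1 <= i < t.+1)%N -> `|X i| <= c) ->
  `|t%:R^-1 * \sum_(1 <= i < t.+1) X i| <= c.
Proof.
move=> t0 h; rewrite normrM normfV normr_nat.
have tp : 0 < t%:R :> R by rewrite ltr0n.
rewrite mulrC ler_pdivrMr //.
apply: le_trans (ler_norm_sum _ _ _) _.
apply: le_trans (ler_sum_nat (G := fun=> c) h) _.
by rewrite sumr_const_nat subn1 /= mulr_natr.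
Qed.

Lemma frob_bound p k (L : 'M[R]_(p, k)) B : (forall i j, `|L i j| <= B) ->
  frob L ^+ 2 <= p%:R * (k%:R * B ^+ 2).
Proof.
move=> h; rewrite frob_sq.
apply: (@le_trans _ _ (\sum_(i < p) (k%:R * B ^+ 2))); last by rewrite sum_constI.
apply: ler_sum => i _.
apply: (@le_trans _ _ (\sum_(j < k) (B ^+ 2))); last by rewrite sum_constI.
apply: ler_sum => j _.
have := h i j; rewrite ler_norml => /andP[h1 h2]; nra.
Qed.

Lemma frob_diff p k (L1 L2 : 'M[R]_(p, k)) B :
  (forall i j, `|L1 i j| <= B) -> (forall i j, `|L2 i j| <= B) ->
  `|frob L1 ^+ 2 - frob L2 ^+ 2| <= p%:R * (k%:R * (frob (L1 - L2) * (2 * B))).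
Proof.
move=> h1 h2; rewrite !frob_sq -sumrB.
apply: le_trans (ler_norm_sum _ _ _) _.
apply: (@le_trans _ _ (\sum_(i < p) (k%:R * (frob (L1 - L2) * (2 * B))))); last by rewrite sum_constI.
apply: ler_sum => i _.
apply: le_trans (sq_diff _ _) _.
apply: (@le_trans _ _ (\sum_(j < k) (frob (L1 - L2) * (2 * B)))); last by rewrite sum_constI.
apply: ler_sum => j _.
apply: ler_pM => //.
  by have := entry_le_frob (L1 - L2) i j; rewrite !mxE.
apply: le_trans (ler_normD _ _) _; have := h1 i j; have := h2 i j; lra.
Qed.


Lemma tri3 (a b s : R) : `|s| <= `|a| + `|b| + `|a - b - s|.
Proof.
rewrite {1}(_ : s = a + (- b) + (- (a - b - s))); last by ring.
apply: le_trans (ler_normD _ _) _; rewrite normrN; apply: lerD => //.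
by apply: le_trans (ler_normD _ _) _; rewrite normrN.
Qed.

Lemma tri3' (a b s : R) : `|a - b - s| <= `|a| + `|b| + `|s|.
Proof.
apply: le_trans (ler_normD _ _) _; rewrite normrN; apply: lerD => //.
by apply: le_trans (ler_normD _ _) _; rewrite normrN.
Qed.

End Helpers.
Arguments min_bounds {R p k lam1 lam2 G d L r s D}.
Arguments frob_bound {R p k L B}.
Arguments frob_diff {R p k L1 L2 B}.
Arguments lhat_ge0 {R p k lam1 lam2 G d L r s}.

Theorem proposition2 (R : realType) (p k : nat) (lam1 lam2 M : R)
  (G : {set {set 'I_p}})
  (ds : nat -> 'cV[R]_p) (Ls : nat -> 'M[R]_(p, k))
  (rs : nat -> 'cV[R]_k) (ss : nat -> 'cV[R]_p)
  (Lset : set 'M[R]_(p, k)) :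
  (0 < p)%N -> (0 < k)%N -> 0 < lam1 -> 0 < lam2 ->
  (forall t, (1 <= t)%N -> Num.sqrt (sqnorm2 (ds t)) <= M) ->
  olsd lam1 lam2 G ds Ls rs ss ->
  compact Lset -> (forall t, Lset (Ls t)) ->
  (* (1) uniform boundedness of \hat ell at minimizers and of ell *)
  (exists C : R, forall t i, (1 <= i)%N ->
     (forall r s, is_minimizer lam1 lam2 G (ds i) (Ls t) r s ->
        `|lhat lam1 lam2 G (ds i) (Ls t) r s| <= C) /\
     `|ell lam1 lam2 G (ds i) (Ls t)| <= C)
  /\
  (* (2) surrogates g_t uniformly bounded and uniformly Lipschitz on Lset *)
  (exists C K : R, forall t, (1 <= t)%N ->
     (forall L, Lset L -> `|surrogate lam1 lam2 G ds ss rs t L| <= C) /\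
     (forall L1 L2, Lset L1 -> Lset L2 ->
        `|surrogate lam1 lam2 G ds ss rs t L1 - surrogate lam1 lam2 G ds ss rs t L2|
          <= K * frob (L1 - L2))).
Proof.
move=> p0 k0 l1 l2 hM hol hco hLs.
set D := M ^+ 2.
have D0 : 0 <= D by apply: sqr_ge0.
have hd : forall i, (1 <= i)%N -> sqnorm2 (ds i) <= D.
  move=> i hi; have h := hM i hi; have h0 := sqrtr_ge0 (sqnorm2 (ds i)).
  have e := sqr_sqrtr (sqnorm2_ge0 (ds i)); rewrite -e /D; nra.
have [B B0 hB] : exists2 B : R, 0 < B & forall L, Lset L -> forall i j, `|L i j| <= B.
  have := compact_bounded hco => /pinfty_ex_gt0 [B B0 hB].
  exists B => // L hL i j; apply: le_trans (hB L hL).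
  rewrite [leRHS]/Num.Def.normr /= mx_normrE; apply/bigmax_geP; right => /=; by exists (i, j).
set Rb := 1 + D / lam1.
have hr : forall i, (1 <= i)%N -> forall j, `|rs i j ord0| <= Rb.
  move=> i hi j; have [hm _] := hol i hi.
  by have [_ _ h] := min_bounds l1 l2 (hd i hi) hm; apply: h.
have hdl : forall i, (1 <= i)%N -> forall l, `|ds i l ord0| <= 1 + D.
  move=> i hi l; apply: le_trans (abs_le_1sq _) _; rewrite lerD2l.
  exact: le_trans (entry_sq_le _ l) (hd i hi).
set Sb := (1 + D) + k%:R * (B * Rb) + (1 + D).
have hs : forall i, (1 <= i)%N -> forall l, `|ss i l ord0| <= Sb.
  move=> i hi l; have [hm _] := hol i hi.
  have [_ he _] := min_bounds l1 l2 (hd i hi) hm.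
  have e1 : `|(ds i - Ls i.-1 *m rs i - ss i) l ord0| <= 1 + D.
    apply: le_trans (abs_le_1sq _) _; rewrite lerD2l; exact: le_trans (entry_sq_le _ l) he.
  have e2 : `|\sum_j Ls i.-1 l j * rs i j ord0| <= k%:R * (B * Rb).
    apply: mulsum_bound => j; [exact: hB (hLs _) l j | exact: hr i hi j].
  have hdl' := hdl i hi l.
  move: e1; rewrite !mxE => e1.
  apply: le_trans (tri3 (ds i l ord0) (\sum_j Ls i.-1 l j * rs i j ord0) _) _.
  rewrite /Sb; apply: lerD => //; apply: lerD => //.
set Eb := (1 + D) + k%:R * (B * Rb) + Sb.
have he : forall i, (1 <= i)%N -> forall L, Lset L -> forall l,
    `|(ds i - L *m rs i - ss i) l ord0| <= Eb.
  move=> i hi L hL l; rewrite !mxE.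
  apply: le_trans (tri3' _ _ _) _; rewrite /Eb; apply: lerD; last exact: hs.
  apply: lerD; first exact: hdl.
  apply: mulsum_bound => j; [exact: hB hL l j | exact: hr i hi j].
split.
  exists D => t i hi; split.
  - move=> r s hm; have [h _ _] := min_bounds l1 l2 (hd i hi) hm.
    rewrite ger0_norm; last exact: lhat_ge0 (ltW l1) (ltW l2).
    apply: le_trans h _; lra.
  - rewrite /ell.
    set S := [set _ | _ in _ & _ in _].
    have memS : S (lhat lam1 lam2 G (ds i) (Ls t) 0 0) by exists 0 => //; exists 0.
    have lbS : lbound S 0 by move=> z [r _ [s _ <-]]; apply: lhat_ge0; apply: ltW.
    have i0 : 0 <= inf S by apply: lb_le_inf => //; exists (lhat lam1 lam2 G (ds i) (Ls t) 0 0).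
    have i1 : inf S <= lhat lam1 lam2 G (ds i) (Ls t) 0 0.
      by apply: ge_inf => //; exists 0.
    rewrite ger0_norm //; apply: le_trans i1 _; rewrite lhat00; have := hd i hi; lra.
set K1 := 2^-1 * (p%:R * (k%:R * Rb * (2 * Eb))).
set K2 := p%:R * (k%:R * (2 * B)).
set Cl := 2^-1 * (p%:R * Eb ^+ 2) + D / 2.
exists (Cl + lam1 / 2 * (p%:R * (k%:R * B ^+ 2))), (K1 + lam1 / 2 * K2).
move=> t ht.
have tp : 0 < t%:R :> R by rewrite ltr0n.
have tc : lam1 / (2 * t%:R) = lam1 / 2 * t%:R^-1 by rewrite invfM mulrA.
have u1 : t%:R^-1 <= 1 :> R by rewrite invf_le1 // ler1n.
have u0 : 0 < t%:R^-1 :> R by rewrite invr_gt0.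
split.
- move=> L hL; rewrite /surrogate.
  apply: le_trans (ler_normD _ _) _; apply: lerD.
  + apply: avg_bound => // i /andP[hi _].
    have [hm _] := hol i hi.
    rewrite ger0_norm; last by apply: lhat_ge0; apply: ltW.
    have [h _ _] := min_bounds l1 l2 (hd i hi) hm.
    move: h; rewrite /lhat => h.
    have hq := sqnorm2_ge0 (ds i - Ls i.-1 *m rs i - ss i).
    have hsq : sqnorm2 (ds i - L *m rs i - ss i) <= p%:R * Eb ^+ 2.
      rewrite /sqnorm2; apply: (@le_trans _ _ (\sum_(l < p) Eb ^+ 2)); last by rewrite sum_constI.
      apply: ler_sum => l _; have := he i hi L hL l; rewrite ler_norml => /andP[a b]; nra.
    rewrite /Cl; lra.
  + have hf := frob_bound (hB L hL).
    have ff : 0 <= frob L ^+ 2 by apply: sqr_ge0.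
    have uf : t%:R^-1 * frob L ^+ 2 <= frob L ^+ 2 by nra.
    rewrite tc -mulrA ger0_norm; last by apply: mulr_ge0; [lra | nra].
    apply: ler_wpM2l; first lra.
    exact: le_trans uf hf.
- move=> L1 L2 h1 h2.
  set F := frob (L1 - L2).
  have E : surrogate lam1 lam2 G ds ss rs t L1 - surrogate lam1 lam2 G ds ss rs t L2 =
     t%:R^-1 * \sum_(1 <= i < t.+1) (lhat lam1 lam2 G (ds i) L1 (rs i) (ss i)
                                     - lhat lam1 lam2 G (ds i) L2 (rs i) (ss i))
     + lam1 / (2 * t%:R) * (frob L1 ^+ 2 - frob L2 ^+ 2).
    by rewrite /surrogate sumrB; ring.
  rewrite E; apply: le_trans (ler_normD _ _) _; rewrite [leRHS]mulrDl; apply: lerD.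
  + apply: avg_bound => // i /andP[hi _].
    have -> : lhat lam1 lam2 G (ds i) L1 (rs i) (ss i) - lhat lam1 lam2 G (ds i) L2 (rs i) (ss i)
       = 2^-1 * (sqnorm2 (ds i - L1 *m rs i - ss i) - sqnorm2 (ds i - L2 *m rs i - ss i)).
      by rewrite /lhat; ring.
    rewrite normrM (ger0_norm (_ : 0 <= 2^-1 :> R)); last by [].
    have -> : K1 * F = 2^-1 * (p%:R * ((k%:R * (F * Rb)) * (2 * Eb))) by rewrite /K1; ring.
    apply: ler_wpM2l => //.
    rewrite /sqnorm2; apply: le_trans (sq_diff _ _) _.
    apply: (@le_trans _ _ (\sum_(l < p) ((k%:R * (F * Rb)) * (2 * Eb)))); last by rewrite sum_constI.
    apply: ler_sum => l _; apply: ler_pM => //.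
    * have hsum : \sum_j (L1 - L2) l j * rs i j ord0
          = \sum_j L1 l j * rs i j ord0 - \sum_j L2 l j * rs i j ord0.
        by rewrite -sumrB; apply: eq_bigr => j _; rewrite !mxE mulrBl.
      have -> : (ds i - L1 *m rs i - ss i) l ord0 - (ds i - L2 *m rs i - ss i) l ord0
          = - \sum_j (L1 - L2) l j * rs i j ord0.
        by rewrite hsum !mxE; ring.
      rewrite normrN; apply: mulsum_bound => j; [exact: entry_le_frob | exact: hr i hi j].
    * apply: le_trans (ler_normD _ _) _.
      have := he i hi L1 h1 l; have := he i hi L2 h2 l; lra.
  + have hfd := frob_diff (hB L1 h1) (hB L2 h2).
    rewrite normrM tc ger0_norm; last by apply: mulr_ge0; lra.
    have hK : p%:R * (k%:R * (F * (2 * B))) = K2 * F by rewrite /K2; ring.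
    rewrite hK in hfd.
    have hn := normr_ge0 (frob L1 ^+ 2 - frob L2 ^+ 2).
    have : t%:R^-1 * `|frob L1 ^+ 2 - frob L2 ^+ 2| <= K2 * F by nra.
    move=> hh.
    have -> : lam1 / 2 / t%:R * `|frob L1 ^+ 2 - frob L2 ^+ 2| =
      lam1 / 2 * (t%:R^-1 * `|frob L1 ^+ 2 - frob L2 ^+ 2|) by ring.
    have -> : lam1 / 2 * K2 * F = lam1 / 2 * (K2 * F) by ring.
    apply: ler_wpM2l; first lra.
    exact: hh.
Qed.
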